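(* Let $\mathcal T\in\Sigma^n$ be a text and $\pi$ be an order-preserving permutation for $\mathcal T$. For any string $P\in\Sigma^+$ that occurs in $\mathcal T$ there exists exactly one primary occurrence $P=\mathcal T[i,i+|P|-1]$. Furthermore, this occurrence is the one minimizing $\pi(i)$ among all occurrences of $P$.
   Context: A text is a string $\mathcal T\in\Sigma^n$ over an integer alphabet whose last symbol $\mathcal T[n]=\$$ occurs only there and is smallest. For $i\ne j$, $\mathrm{rlce}(i,j)$ is the length of the longest common prefix of $\mathcal T[i,n]$ and $\mathcal T[j,n]$. A permutation $\pi:[n]\to[n]$ is order-preserving for $\mathcal T$ if for all $i,j\in[n-1]$, $\pi(i)<\pi(j)$ and $\mathcal T[i,i+1]=\mathcal T[j,j+1]$ imply $\pi(i+1)<\pi(j+1)$. $\mathrm{LPF}_\pi[i]=0$ if $\pi(i)=1$, else $\mathrm{LPF}_\pi[i]=\max_{\pi(j)<\pi(i)}\mathrm{rlce}(j,i)$. An occurrence $\mathcal T[i,i+|P|-1]=P$ is primary if $\mathrm{LPF}_\pi[i]<|P|$, and secondary otherwise. *)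

(* Defs.v *)
(* Positions are 0-based: position k (0 <= k < n) of the
   seq T corresponds to the paper's position k+1. *)
From mathcomp Require Import all_boot all_order all_fingroup.
Unset Strict Implicit. Unset Printing Implicit Defensive.

Definition is_text (T : seq nat) : Prop :=
  0 < size T /\
  forall k, k < (size T).-1 ->
    nth 0 T k != nth 0 T (size T).-1 /\ nth 0 T (size T).-1 <= nth 0 T k.

Fixpoint lcp (s t : seq nat) : nat :=
  match s, t with
  | x :: s', y :: t' => if x == y then (lcp s' t').+1 else 0
  | _, _ => 0
  end.

Definition rlce (T : seq nat) (i j : nat) : nat := lcp (drop i T) (drop j T).

Definition order_preserving (T : seq nat) (pi : {perm 'I_(size T)}) : Prop :=
  forall (i j i1 j1 : 'I_(size T)),
    val i1 = (val i).+1 -> val j1 = (val j).+1 ->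
    pi i < pi j ->
    nth 0 T i = nth 0 T j -> nth 0 T i1 = nth 0 T j1 ->
    pi i1 < pi j1.

Definition LPF (T : seq nat) (pi : {perm 'I_(size T)}) (i : 'I_(size T)) : nat :=
  if val (pi i) == 0 then 0
  else \max_(j : 'I_(size T) | pi j < pi i) rlce T j i.

Definition occurs_at (T P : seq nat) (i : nat) : Prop :=
  i + size P <= size T /\ take (size P) (drop i T) = P.

Definition primary (T : seq nat) (pi : {perm 'I_(size T)}) (P : seq nat)
  (i : 'I_(size T)) : Prop :=
  occurs_at T P i /\ LPF T pi i < size P.

(* Main.v *)
Require Import Defs.
From mathcomp Require Import all_boot all_order all_fingroup.

Lemma lcp_geA (s t : seq nat) n :
  n <= size s -> n <= size t -> take n s = take n t -> n <= lcp s t.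
Proof.
elim: s t n => [|x s IH] [|y t] [|n] //= Hs Ht [-> Heq].
by rewrite eqxx ltnS; apply: IH.
Qed.

Lemma lcp_geB (s t : seq nat) n :
  n <= lcp s t -> n <= size s /\ take n s = take n t.
Proof.
elim: s t n => [|x s IH] [|y t] [|n] //=.
case: eqP => // <-; rewrite ltnS => /IH [H1 H2]; by rewrite H2.
Qed.

Definition occb (T P : seq nat) (i : nat) : bool :=
  (i + size P <= size T) && (take (size P) (drop i T) == P).

Lemma occbP T P i : reflect (occurs_at T P i) (occb T P i).
Proof. by apply: (iffP andP) => [[a /eqP b]|[a b]]; split => //; apply/eqP. Qed.

Lemma occ_rlce T P i j : occurs_at T P i -> occurs_at T P j -> size P <= rlce T i j.
Proof.
move=> [Hi Ei] [Hj Ej]; apply: lcp_geA; rewrite ?size_drop ?leq_subRL ?Ei ?Ej //;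
 first [exact: leq_trans (leq_addr _ _) Hi | exact: leq_trans (leq_addr _ _) Hj].
Qed.

Lemma rlce_occ T P i j : 0 < size P -> occurs_at T P j -> size P <= rlce T i j -> occurs_at T P i.
Proof.
move=> HP [Hj Ej] /lcp_geB [H1 H2]; split; last by rewrite H2.
move: H1; rewrite size_drop => H1.
have Hl : i < size T by rewrite -subn_gt0; apply: leq_trans HP H1.
by rewrite -(subnKC (ltnW Hl)) leq_add2l.
Qed.

Theorem lemma28 (T : seq nat) (pi : {perm 'I_(size T)}) (P : seq nat) :
  is_text T -> order_preserving T pi -> 0 < size P ->
  (exists i : 'I_(size T), occurs_at T P i) ->
  exists i : 'I_(size T),
    [/\ primary T pi P i,
        (forall j : 'I_(size T), primary T pi P j -> j = i) &
        (forall j : 'I_(size T), occurs_at T P j -> pi i <= pi j)].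
Proof.
move=> _ _ HP Hex.
have Hm : exists m, [exists i : 'I_(size T), occb T P i && (val (pi i) == m)].
  case: Hex => i Hi; exists (val (pi i)); apply/existsP; exists i.
  by rewrite eqxx andbT; apply/occbP.
case: (ex_minnP Hm) => m /existsP [i /andP [/occbP Hi /eqP Em]] Hmin.
have Hmin' : forall j : 'I_(size T), occurs_at T P j -> pi i <= pi j.
  move=> j /occbP Hj; rewrite Em; apply: Hmin; apply/existsP; exists j.
  by rewrite Hj eqxx.
have Hprim : primary T pi P i.
  split => //; rewrite /LPF; case: eqP => // _.
  rewrite -(prednK HP) ltnS; apply/bigmax_leqP => j Hj.
  rewrite -ltnS prednK //; rewrite ltnNge; apply/negP => Hr.
  have := Hmin' j (@rlce_occ T P j i HP Hi Hr); by rewrite leqNgt Hj.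
exists i; split => // j [Hj Hl].
apply/eqP; case: (eqVneq j i) => // Hne; exfalso.
have Hlt : pi i < pi j.
  rewrite ltn_neqAle Hmin' // andbT; apply/negP => /eqP /val_inj /perm_inj E.
  by rewrite E eqxx in Hne.
move: Hl; rewrite /LPF; case: eqP => [E|_]; first by rewrite E in Hlt.
rewrite ltnNge; apply/negP/negPn.
apply: leq_trans (@occ_rlce T P i j Hi Hj) _.
exact: (@leq_bigmax_cond _ (fun k => pi k < pi j) (fun k => rlce T k j) i Hlt).
Qed.
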